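(* Let $G=(V,E)$ be a finite directed graph with $k$ players; player $i$ has a source–sink pair $(s_i,t_i)$ and flow amount $r_i>0$, and routes all of $r_i$ along a single path $P_i$ in the set $\Pi_i$ of $s_i$–$t_i$ paths. For a feasible flow $f$ (a choice of $P_i\in\Pi_i$ for each $i$), let $f_e=\sum_{i:e\in P_i} r_i$. Each edge $e$ has an affine congestion function $c_e(x)=a_e x+b_e$ with $c_e:\mathbb{R}^+\to\mathbb{R}^+$, and a unit-price function $u_e:\mathbb{R}^+\to\mathbb{R}^+$; the cost to player $i$ of path $P$ is $t^i_P(f)=\sum_{e\in P}\bigl(c_e(f_e)+u_e(r_i)\bigr)$. The social cost of $f$ is $$SC(f)=\sum_{e\in E} c_e(f_e)f_e+\sum_{i=1}^k\sum_{e\in P_i}u_e(r_i)\,r_i .$$ A flow $f$ is an equilibrium flow if no player $i$ can obtain $t^i_{\tilde P}(\tilde f)<t^i_{P_i}(f)$ by switching to another path $\tilde P\in\Pi_i$, where $\tilde f$ is $f$ with player $i$'s path replaced by $\tilde P$. Let $f^*$ be a feasible flow minimizing $SC$. Then for every equilibrium flow $f$, $$\frac{SC(f)}{SC(f^* )}\le\frac{3+\sqrt5}{2},$$ i.e. the price of anarchy is at most $\frac{3+\sqrt5}{2}\approx 2.618$.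
   Context: The price of anarchy is the ratio of the social cost of the worst equilibrium flow to the social cost of an optimal (social-cost-minimizing) feasible flow. *)

(* Defs.v *)
From HB Require Import structures.
From mathcomp Require Import all_boot all_order all_algebra.
From mathcomp Require Import reals.
Set Implicit Arguments. Unset Strict Implicit. Unset Printing Implicit Defensive.
Import Order.TTheory GRing.Theory Num.Theory.
Local Open Scope ring_scope.

Section Network.
(* A finite directed (multi)graph: vertex type V, edge type E,
   each edge e goes from [tl e] to [hd e]. *)
Variables (V E : finType) (tl hd : E -> V).

Fixpoint is_walk (x y : V) (p : seq E) : bool :=
  match p with
  | [::] => x == y
  | e :: p' => (tl e == x) && is_walk (hd e) y p'
  end.

Definition is_path (x y : V) (p : seq E) : bool :=
  is_walk x y p && uniq (x :: map hd p).

Variable R : realType.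
Variable k : nat.
Variables (s t : 'I_k -> V) (r : 'I_k -> R).
Variables (a b : E -> R) (u : E -> R -> R).

(* a (pure) flow = choice of one path per player *)
Definition flow := 'I_k -> seq E.

Definition feasible (P : flow) : Prop := forall i, is_path (s i) (t i) (P i).

Definition load (P : flow) (e : E) : R := \sum_(i < k | e \in P i) r i.

Definition cong (e : E) (x : R) : R := a e * x + b e.

Definition pcost (i : 'I_k) (P : flow) (p : seq E) : R :=
  \sum_(e <- p) (cong e (load P e) + u e (r i)).

Definition SC (P : flow) : R :=
  \sum_(e : E) cong e (load P e) * load P e
  + \sum_(i < k) \sum_(e <- P i) u e (r i) * r i.

Definition switch (P : flow) (i : 'I_k) (p : seq E) : flow :=
  fun j => if j == i then p else P j.

Definition equilibrium (P : flow) : Prop :=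
  feasible P /\
  forall i p, is_path (s i) (t i) p ->
    ~ (pcost i (switch P i p) p < pcost i P (P i)).

Definition optimal (P : flow) : Prop :=
  feasible P /\ forall Q, feasible Q -> SC P <= SC Q.

End Network.

(* Main.v *)
Require Import Defs.
From HB Require Import structures.
From mathcomp Require Import all_boot all_order all_algebra.
From mathcomp Require Import reals.
From mathcomp Require Import ring lra.
Import Order.TTheory GRing.Theory Num.Theory.
Local Open Scope ring_scope.

Lemma path_uniq (V E : finType) (tl hd : E -> V) x y p :
  is_path tl hd x y p -> uniq p.
Proof. by case/andP=> _ /= /andP[_ /map_uniq]. Qed.

Lemma sum_uniqE (R : realType) (T : finType) (p : seq T) (F : T -> R) :
  uniq p -> \sum_(e <- p) F e = \sum_e (if e \in p then F e else 0).
Proof. by move=> up; rewrite big_uniq // big_mkcond. Qed.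

Lemma G1 (R : realType) (E : finType) k (Q : flow E k) (h : 'I_k -> E -> R) :
  (forall i, uniq (Q i)) ->
  \sum_(i < k) \sum_(e <- Q i) h i e = \sum_e \sum_(i < k | e \in Q i) h i e.
Proof.
move=> uq; rewrite (eq_bigr (fun i => \sum_e (if e \in Q i then h i e else 0))).
  by rewrite exchange_big; apply: eq_bigr => e _; rewrite [RHS]big_mkcond.
by move=> i _; rewrite sum_uniqE.
Qed.

Lemma sq_sum_le (R : realType) k (P : pred 'I_k) (x : 'I_k -> R) :
  (forall i, 0 <= x i) -> \sum_(i | P i) x i ^+ 2 <= (\sum_(i | P i) x i) ^+ 2.
Proof.
move=> hx; rewrite expr2 mulr_suml; apply: ler_sum => i Pi.
rewrite expr2 ler_wpM2l //.
rewrite (bigD1 i) //= lerDl; apply: sumr_ge0 => j _; exact: hx.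
Qed.

Lemma load_switch (R : realType) (E : finType) k (r : 'I_k -> R) (hr : forall i, 0 < r i)
  (f : flow E k) i p e : load r (switch f i p) e <= load r f e + r i.
Proof.
rewrite /load big_mkcond [X in _ <= X + _]big_mkcond /=.
rewrite (bigD1 i) //= [X in _ <= X + _](bigD1 i) //= /switch eqxx.
rewrite (eq_bigr (fun j => if e \in f j then r j else 0)); last first.
  by move=> j /negbTE ->.
have := hr i; case: (e \in p); case: (e \in f i); lra.
Qed.

Theorem mainTheorem3 (V E : finType) (tl hd : E -> V) (R : realType) (k : nat)
  (s t : 'I_k -> V) (r : 'I_k -> R) (a b : E -> R) (u : E -> R -> R)
  (hr : forall i, 0 < r i)
  (ha : forall e, 0 <= a e) (hb : forall e, 0 <= b e)
  (hu : forall e x, 0 <= x -> 0 <= u e x)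
  (fstar f : flow E k) :
  optimal tl hd s t r a b u fstar ->
  equilibrium tl hd s t r a b u f ->
  SC r a b u f <= (3 + Num.sqrt 5) / 2 * SC r a b u fstar.
Proof.
move=> [fsF _] [fF eqm].
have uf i : uniq (f i) by exact: path_uniq (fF i).
have us i : uniq (fstar i) by exact: path_uniq (fsF i).
set L := load r f; set Ls := load r fstar.
pose W e := \sum_(i | e \in f i) u e (r i) * r i.
pose Ws e := \sum_(i | e \in fstar i) u e (r i) * r i.
pose Q e := \sum_(i | e \in fstar i) r i ^+ 2.
have L0 e : 0 <= L e by apply: sumr_ge0 => i _; exact: ltW.
have Ls0 e : 0 <= Ls e by apply: sumr_ge0 => i _; exact: ltW.
have W0 e : 0 <= W e.
  by apply: sumr_ge0 => i _; apply: mulr_ge0; [apply: hu; exact: ltW|exact: ltW].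
have Ws0 e : 0 <= Ws e.
  by apply: sumr_ge0 => i _; apply: mulr_ge0; [apply: hu; exact: ltW|exact: ltW].
have QL e : Q e <= Ls e ^+ 2 by apply: sq_sum_le => i; exact: ltW.
have SCf : SC r a b u f = \sum_e ((a e * L e + b e) * L e + W e).
  by rewrite /SC G1 // big_split.
have SCs : SC r a b u fstar = \sum_e ((a e * Ls e + b e) * Ls e + Ws e).
  by rewrite /SC G1 // big_split.
have Hi i : pcost r a b u i f (f i) <=
    \sum_(e <- fstar i) (a e * (L e + r i) + b e + u e (r i)).
  have H0 := eqm i (fstar i) (fsF i).
  have H : pcost r a b u i f (f i) <= pcost r a b u i (switch f i (fstar i)) (fstar i).
    by rewrite leNgt; apply/negP.
  apply: le_trans H _.
  rewrite /pcost; apply: ler_sum => e _; rewrite lerD2r /cong lerD2r.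
  by apply: ler_wpM2l; [exact: ha | exact: load_switch].
have LHS : \sum_i r i * pcost r a b u i f (f i) = SC r a b u f.
  rewrite SCf (eq_bigr (fun i => \sum_(e <- f i) r i * (cong a b e (L e) + u e (r i))));
    last by move=> i _; rewrite /pcost mulr_sumr.
  rewrite G1 //; apply: eq_bigr => e _.
  rewrite /L /load /W mulr_sumr -big_split; apply: eq_bigr => i _.
  rewrite /cong /=; ring.
have RHS : \sum_i r i * \sum_(e <- fstar i) (a e * (L e + r i) + b e + u e (r i))
    = \sum_e ((a e * L e + b e) * Ls e + a e * Q e + Ws e).
  rewrite (eq_bigr (fun i => \sum_(e <- fstar i) r i * (a e * (L e + r i) + b e + u e (r i))));
    last by move=> i _; rewrite mulr_sumr.
  rewrite G1 //; apply: eq_bigr => e _.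
  move: (L e) => Le.
  rewrite /Q /Ws /Ls /load !mulr_sumr -!big_split /=.
  apply: eq_bigr => i _; ring.
have key : SC r a b u f <= \sum_e ((a e * L e + b e) * Ls e + a e * Q e + Ws e).
  rewrite -LHS -RHS; apply: ler_sum => i _; apply: ler_wpM2l; [exact: ltW | exact: Hi].
set c := Num.sqrt 5.
have c2 : c ^+ 2 = 5 by rewrite sqr_sqrtr.
have c0 : 0 <= c by rewrite sqrtr_ge0.
have c1 : 1 < c by nra.
have c5 : c < 5 by nra.
have edge e : 4 * ((a e * L e + b e) * Ls e + a e * Q e + Ws e) <=
    (c - 1) * ((a e * L e + b e) * L e + W e) + (5 + c) * ((a e * Ls e + b e) * Ls e + Ws e).
  have h1 : 4 * (a e * L e * Ls e) <= (c - 1) * (a e * L e ^+ 2) + (1 + c) * (a e * Ls e ^+ 2).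
    rewrite -subr_ge0; have hc : 0 < c - 1 by rewrite subr_gt0.
    rewrite -(pmulr_rge0 _ hc).
    have -> : (c - 1) * ((c - 1) * (a e * L e ^+ 2) + (1 + c) * (a e * Ls e ^+ 2) - 4 * (a e * L e * Ls e))
       = a e * ((c - 1) * L e - 2 * Ls e) ^+ 2 + a e * Ls e ^+ 2 * (c ^+ 2 - 5) by ring.
    by rewrite c2 subrr mulr0 addr0; apply: mulr_ge0 => //; apply: sqr_ge0.
  have h2 : a e * Q e <= a e * Ls e ^+ 2 by apply: ler_wpM2l.
  have h3 : 0 <= b e * L e by apply: mulr_ge0.
  have h4 : 0 <= b e * Ls e by apply: mulr_ge0.
  have h5 : 0 <= (c - 1) * (b e * L e) by apply: mulr_ge0 => //; lra.
  have h6 : 0 <= (c - 1) * W e by apply: mulr_ge0 => //; lra.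
  have h7 : 0 <= c * (b e * Ls e) by apply: mulr_ge0.
  have h8 : 0 <= c * Ws e by apply: mulr_ge0.
  have h9 := Ws0 e.
  rewrite !mulrDl !mulrDr; rewrite expr2 in h1 h2; lra.
have main : 4 * SC r a b u f <= (c - 1) * SC r a b u f + (5 + c) * SC r a b u fstar.
  rewrite {2}SCf SCs !mulr_sumr -big_split; apply: le_trans (ler_sum _ (fun e _ => edge e)).
  by rewrite -mulr_sumr ler_wpM2l // -?key.
rewrite -subr_ge0; have hc : 0 < 5 - c by rewrite subr_gt0.
rewrite -(pmulr_rge0 _ hc).
have -> : (5 - c) * ((3 + c) / 2 * SC r a b u fstar - SC r a b u f) =
  ((5 + c) * SC r a b u fstar + (c - 1) * SC r a b u f - 4 * SC r a b u f)
   + (5 - c ^+ 2) / 2 * SC r a b u fstar by field.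
rewrite c2 subrr !mul0r addr0 subr_ge0; move: main; lra.
Qed.
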